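(* There exists an absolute constant $c$ such that for all integers $n\ge 5$ and $k\ge t_{n-1}(cn)$, every function $\pi_{n,k}$ has maximum distortion at least $4$. In particular, there exist $n$ and $k$ such that every function $\pi_{n,k}$ has maximum distortion at least $4$ (equivalently, every set of functions assigning $n$ agents to $k$ tasks has maximum switching cost at least $4$).
   Context: For positive integers $n,k$, let $\mathcal S_{n,k}$ be the set of all multisets of size $n$ with elements from $[k]=\{1,\dots,k\}$. A function $\pi_{n,k}$ assigns to each $S\in\mathcal S_{n,k}$ a string $\pi_{n,k}(S)$ of length $n$ (positions indexed by $[n]$) whose letters, counted with multiplicity, form exactly the multiset $S$ (i.e. a permutation of $S$). For strings $X,Y$ of equal length, $d(X,Y)$ denotes their Hamming distance. For multisets $A,B$, the symmetric difference $A\oplus B$ is the multiset obtained by removing from $A$ and from $B$ their maximal common sub-multiset $A\cap B$ and taking the union of what remains. A pair $S,S'\in\mathcal S_{n,k}$ with $|S\oplus S'|=2$ has distortion $d(\pi_{n,k}(S),\pi_{n,k}(S'))$; the maximum distortion of $\pi_{n,k}$ is the maximum distortion over all pairs $S,S'\in\mathcal S_{n,k}$ with $|S\oplus S'|=2$. The tower function is defined by $t_1(x)=x$ and $t_{i+1}(x)=2^{t_i(x)}$. *)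

(* Defs.v *)
From mathcomp Require Import all_boot.
Set Implicit Arguments. Unset Strict Implicit. Unset Printing Implicit Defensive.

(* Letters [k] = {1..k} are represented by 'I_k = {0..k-1}; positions [n] by 'I_n. *)

(* A multiset over [k] with multiplicities at most n, given by its count
   function.  It lies in S_{n,k} iff the multiplicities sum to n. *)
Definition mset (n k : nat) := {ffun 'I_k -> 'I_n.+1}.
Definition is_msize (n k : nat) (S : mset n k) : bool := \sum_(i < k) (S i : nat) == n.

Definition str (n k : nat) := {ffun 'I_n -> 'I_k}.

Definition letter_count (n k : nat) (X : str n k) (a : 'I_k) : nat :=
  #|[set p : 'I_n | X p == a]|.

Definition hamming (n k : nat) (X Y : str n k) : nat := #|[set p : 'I_n | X p != Y p]|.

Definition symdiff_size (n k : nat) (A B : mset n k) : nat :=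
  \sum_(i < k) (((A i : nat) - B i) + ((B i : nat) - A i)).

(* pi_{n,k}: a function assigning to each S in S_{n,k} a permutation of S
   (values on non-members of S_{n,k} are irrelevant). *)
Definition is_assignment (n k : nat) (pi : mset n k -> str n k) : Prop :=
  forall S : mset n k, is_msize S ->
    forall a : 'I_k, letter_count (pi S) a = S a.

Definition max_distortion (n k : nat) (pi : mset n k -> str n k) : nat :=
  \max_(S : mset n k | is_msize S)
    \max_(S' : mset n k | is_msize S' && (symdiff_size S S' == 2))
      hamming (pi S) (pi S').

(* Tower function: t_1(x) = x, t_{i+1}(x) = 2^{t_i(x)} (for i >= 1). *)
Definition tower (i x : nat) : nat := iter i.-1 (fun y => 2 ^ y) x.

(* Main.v *)
Require Import Defs.
From mathcomp Require Import all_boot.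
From mathcomp Require Import zify.
Set Implicit Arguments. Unset Strict Implicit. Unset Printing Implicit Defensive.

Fixpoint subseqs (s : seq nat) : seq (seq nat) :=
  if s is x :: s' then map (cons x) (subseqs s') ++ subseqs s' else [:: [::]].

Lemma size_subseqs s : size (subseqs s) = 2 ^ size s.
Proof. elim: s => //= x s IH; rewrite size_cat size_map IH expnS; lia. Qed.

Lemma mem_subseqs A s : subseq A s -> A \in subseqs s.
Proof.
elim: s A => [|x s IH] A /=.
  by case: A.
case: A => [|y A] /=.
  by move=> _; rewrite mem_cat IH ?sub0seq ?orbT.
case: eqP => [<- H|_ H]; rewrite mem_cat.
  by rewrite (map_f (cons y) (IH _ H)).
by rewrite IH ?orbT.
Qed.

Lemma pigeon (q : nat) (g : nat -> nat) (C : seq nat) :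
  0 < q -> (forall c, g c < q) ->
  exists v, size C <= count (fun c => g c == v) C * q.
Proof.
move=> q0 gq.
have Hs : \sum_(v < q) count (fun c => g c == v) C = size C.
  elim: C => [|x C IH] /=; first by rewrite big1.
  rewrite big_split /= IH.
  rewrite (bigD1 (Ordinal (gq x))) //= eqxx big1 ?addn0 ?add1n //.
  move=> i /negbTE Hi; apply/eqP; rewrite eqb0; apply/negP=> /eqP E.
  by move: Hi; rewrite -val_eqE /= E eqxx.
case: (boolP [exists v : 'I_q, size C <= count (fun c => g c == v) C * q]).
  by case/existsP => v Hv; exists (val v).
move/existsPn => Hn.
have Hlt : forall v : 'I_q, (count (fun c => g c == v) C * q).+1 <= size C.
  by move=> v; rewrite ltnNge Hn.
have : \sum_(v < q) (count (fun c => g c == v) C * q).+1 <= \sum_(v < q) size C.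
  by apply: leq_sum => v _; exact: Hlt.
under eq_bigr => i _ do rewrite -addn1.
rewrite big_split /= -big_distrl /= Hs !sum_nat_const !card_ord.
rewrite /= !muln1 => H. nia.
Qed.

Lemma refine q (f : seq nat -> nat) (fq : forall t, f t < q) (q0 : 0 < q)
  (As : seq (seq nat)) (C : seq nat) :
  exists C', [/\ subseq C' C, size C <= size C' * q ^ size As &
    forall A, A \in As -> forall y z, y \in C' -> z \in C' ->
      f (rcons A y) = f (rcons A z)].
Proof.
elim: As C => [|A As IH] C.
  by exists C; split => //; rewrite ?subseq_refl ?muln1.
have [C1 [s1 sz1 P1]] := IH C.
have [v Hv] := pigeon C1 q0 (fun c => fq (rcons A c)).
exists (filter (fun c => f (rcons A c) == v) C1); split.
- exact: subseq_trans (filter_subseq _ _) s1.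
- rewrite size_filter /= expnS; apply: (leq_trans sz1).
  rewrite mulnCA mulnA leq_mul2r; apply/orP; right.
  by rewrite mulnC.
- move=> A0; rewrite inE => /orP [/eqP ->|HA] y z.
    by rewrite !mem_filter => /andP [/eqP -> _] /andP [/eqP -> _].
  by rewrite !mem_filter => /andP [_ Hy] /andP [_ Hz]; apply: P1.
Qed.

Definition EH (f : seq nat -> nat) (ch C : seq nat) :=
  forall A, subseq A ch -> forall y z, y \in ch ++ C -> z \in ch ++ C ->
    all (fun u => u < y) A -> all (fun u => u < z) A -> f (rcons A y) = f (rcons A z).

Lemma subseq_rcons_case (A ch : seq nat) x :
  subseq A (rcons ch x) -> subseq A ch \/ exists A', A = rcons A' x /\ subseq A' ch.
Proof.
case/lastP: A => [|A' y]; first by left; rewrite sub0seq.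
rewrite -subseq_rev !rev_rcons /=; case: eqP => [-> H|_ H].
  by right; exists A'; rewrite -subseq_rev.
by left; rewrite -subseq_rev rev_rcons.
Qed.

Lemma build q (f : seq nat -> nat) (fq : forall t, f t < q) (q0 : 0 < q)
  (G : seq nat) (pG : pairwise ltn G) L t :
  forall ch C, subseq (ch ++ C) G -> EH f ch C -> size ch + t <= L ->
    (2 * q ^ (2 ^ L)) ^ t <= size C ->
  exists ch' C', [/\ subseq (ch' ++ C') G, EH f ch' C' & size ch' = size ch + t].
Proof.
elim: t => [|t IH] ch C sG eh szL szC.
  by exists ch, C; rewrite addn0.
case: C sG eh szC => [|x C0] sG eh szC.
  by move: szC; rewrite /= leqn0 expn_eq0 muln_eq0 expn_eq0 (negbTE (lt0n_neq0 q0)).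
have [C' [sC' szC' PC']] := refine fq q0 (subseqs (rcons ch x)) C0.
have pw : pairwise ltn (ch ++ x :: C0) by exact: subseq_pairwise sG pG.
move: (pw); rewrite pairwise_cat /= => /and3P [ar _ /andP [ax _]].
have chx : forall u, u \in ch -> u < x.
  by move=> u Hu; move/allrelP: ar => /(_ u x Hu); rewrite inE eqxx => /(_ isT).
have xC : forall u, u \in C0 -> x < u by move=> u Hu; move/allP: ax => /(_ u Hu).
have D0 : 0 < q ^ (2 ^ L) by rewrite expn_gt0 q0.
case: (IH (rcons ch x) C') => [| | | |ch' [C'' [s' e' z']]].
- rewrite cat_rcons; apply: subseq_trans sG; apply: cat_subseq (subseq_refl _) _.
  by rewrite /= eqxx.
- move=> A /subseq_rcons_case [HA|[A' [-> HA']]] y z Hy Hz ay az.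
  + apply: eh => //.
    * move: Hy; rewrite cat_rcons !mem_cat !inE => /or3P [->|->|/(mem_subseq sC') ->];
      by rewrite ?orbT.
    * move: Hz; rewrite cat_rcons !mem_cat !inE => /or3P [->|->|/(mem_subseq sC') ->];
      by rewrite ?orbT.
  + have inC : forall w, w \in rcons ch x ++ C' -> all (fun u => u < w) (rcons A' x) -> w \in C'.
      move=> w; rewrite cat_rcons mem_cat inE all_rcons => /or3P [/chx H|/eqP->|//];
      by case/andP; rewrite ?ltnn //; move=> H2; have := ltn_trans H H2; rewrite ltnn.
    apply: PC'; [|exact: inC Hy ay|exact: inC Hz az].
    by apply: mem_subseqs; rewrite -!cats1; apply: cat_subseq; rewrite ?subseq_refl.
- by move: szL; rewrite size_rcons addSnnS.
- have h1 : q ^ (2 ^ size (rcons ch x)) <= q ^ (2 ^ L).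
    apply: leq_pexp2l => //; apply: leq_pexp2l => //; rewrite size_rcons; lia.
  move: szC' h1; rewrite size_subseqs => h2 h3.
  have h4 : size C0 <= size C' * q ^ (2 ^ L) by apply: (leq_trans h2); rewrite leq_mul2l h3 orbT.
  move: szC; rewrite /= expnS => h5.
  set X := (2 * q ^ 2 ^ L) ^ t in h5 *. set D := q ^ (2 ^ L) in h4 h5 D0.
  have X0 : 0 < X by rewrite expn_gt0 muln_gt0 D0.
  clearbody X D; rewrite leqNgt; apply/negP => hc.
  have h6 : size C' <= X - 1 by rewrite subn1 -ltnS prednK.
  have h7 : size C' * D <= (X - 1) * D by rewrite leq_mul2r h6 orbT.
  set c0 := size C0 in h4 h5. set c1 := size C' in h4 h7. clearbody c0 c1. nia.
exists ch', C''; split => //; by rewrite z' size_rcons addSnnS.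
Qed.

Fixpoint Rm (m q s : nat) : nat :=
  if m is m'.+1 then q * (2 * q ^ (2 ^ Rm m' q s)) ^ Rm m' q s else s.

Definition homog (f : seq nat -> nat) m (H : seq nat) :=
  exists c, forall t, subseq t H -> size t = m -> f t = c.

Lemma ramsey m : forall q s (f : seq nat -> nat), 0 < q -> (forall t, f t < q) ->
  forall G, pairwise ltn G -> Rm m q s <= size G ->
  exists H, [/\ subseq H G, size H = s & homog f m H].
Proof.
elim: m => [|m IH] q s f q0 fq G pG /= szG.
  exists (take s G); split; first exact: take_subseq.
    by rewrite size_takel.
  exists (f [::]) => t _; case: t => //.
set L := Rm m q s in szG *.
have [C [sC szC PC]] := refine fq q0 [:: [::]] G.
have szC' : (2 * q ^ (2 ^ L)) ^ L <= size C.
  rewrite -(leq_pmul2l q0); apply: (leq_trans szG); rewrite mulnC.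
  by move: szC; rewrite /= expn1.
have eh0 : EH f [::] C.
  move=> A; rewrite subseq0 => /eqP -> y z Hy Hz _ _; exact: PC (mem_head _ _) _ _ Hy Hz.
have [a [C'' [sa eha za]]] := @build q f fq q0 G pG L L [::] C sC eh0 (leqnn _) szC'.
have saG : subseq a G := subseq_trans (prefix_subseq _ _) sa.
have pa : pairwise ltn a := subseq_pairwise saG pG.
pose succ (B : seq nat) := nth 0 [seq v <- a | all (fun u => u < v) B] 0.
pose g (B : seq nat) := f (rcons B (succ B)).
have szA : Rm m q s <= size a by rewrite za.
have [H [sH szH [c hc]]] := IH q s g q0 (fun B => fq _) a pa szA.
exists H; split => //; first exact: subseq_trans sH saG.
exists c => t ht; case/lastP: t ht => [|B y] //= ht; rewrite size_rcons => -[szB].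
have sB : subseq B H := subseq_trans (subseq_rcons B y) ht.
have ya : y \in a by apply: (mem_subseq sH); apply: (mem_subseq ht); rewrite mem_rcons mem_head.
have pBy : pairwise ltn (rcons B y).
  exact: subseq_pairwise (subseq_trans ht sH) pa.
move: (pBy); rewrite pairwise_rcons => /andP [aB _].
have yF : y \in [seq v <- a | all (fun u => u < v) B] by rewrite mem_filter aB.
have sF : succ B \in [seq v <- a | all (fun u => u < v) B].
  by rewrite /succ; case: [seq v <- a | _] yF => // w F' _; exact: mem_head.
move: sF; rewrite mem_filter => /andP [aS Sa].
rewrite -(hc B sB szB) /g.
apply: eha => //; first exact: subseq_trans sB sH.
- by rewrite mem_cat ya.
- by rewrite mem_cat Sa.
Qed.

Definition T h x := iter h (fun y => 2 ^ y) x.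

Lemma T_S h x : T h.+1 x = 2 ^ T h x. Proof. by []. Qed.

Lemma T_ge h x : x <= T h x.
Proof. elim: h => //= h IH; exact: leq_trans IH (ltnW (ltn_expl _ (isT : 1 < 2))). Qed.

Lemma T_mono_x h x y : x <= y -> T h x <= T h y.
Proof. move=> xy; elim: h => //= h IH; by rewrite leq_exp2l. Qed.

Lemma T_add d h x : T (d + h) x = T d (T h x).
Proof. exact: iterD. Qed.

Lemma T_mono_h h h' x : h <= h' -> T h x <= T h' x.
Proof. move=> hh; rewrite -(subnK hh) T_add; exact: T_ge. Qed.

Lemma expl_mono m1 m2 e : m1 <= m2 -> m1 ^ e <= m2 ^ e.
Proof. move=> H; elim: e => // e IH; rewrite !expnS; exact: leq_mul. Qed.

Lemma le_pow_succ2 n : 2 <= n -> n.+2 <= 2 ^ n.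
Proof.
elim: n => // n IH; rewrite ltnS leq_eqVlt => /orP [/eqP <- //|H].
rewrite expnS; have := IH H; lia.
Qed.

Lemma step_bound b L q : 3 <= b -> q <= 2 ^ b -> L <= 2 ^ b ->
  q * (2 * q ^ (2 ^ L)) ^ L <= T 5 b.
Proof.
move=> b3 qb Lb.
set B := 2 ^ b. set Z := 2 ^ B.
have bB : b <= B by apply: ltnW; exact: ltn_expl.
have BZ : B <= Z by apply: ltnW; exact: ltn_expl.
have B8 : 8 <= B by rewrite /B (leq_exp2l 3 b (isT : 1 < 2)).
have h1 : q ^ (2 ^ L) <= 2 ^ (b * Z).
  rewrite expnM; apply: (leq_trans (expl_mono _ qb)).
  apply: leq_pexp2l; first by rewrite expn_gt0.
  by rewrite /Z leq_exp2l.
have h2 : 2 * q ^ (2 ^ L) <= 2 ^ (1 + b * Z) by rewrite expnD expn1 leq_mul2l h1.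
have h3 : (2 * q ^ (2 ^ L)) ^ L <= 2 ^ ((1 + b * Z) * B).
  rewrite expnM; apply: (leq_trans (expl_mono _ h2)).
  by apply: leq_pexp2l; rewrite ?expn_gt0.
have h4 : q * (2 * q ^ (2 ^ L)) ^ L <= 2 ^ (b + (1 + b * Z) * B).
  by rewrite expnD; apply: leq_mul.
apply: (leq_trans h4); rewrite T_S leq_exp2l //.
have h5 : b + (1 + b * Z) * B <= 2 ^ (B * 4).
  rewrite expnM -/Z.
  have h7 : b * Z * B <= Z * Z * Z.
    apply: leq_mul => //; apply: leq_mul => //; exact: leq_trans bB BZ.
  have h8 : 2 <= Z by apply: leq_trans BZ; lia.
  nia.
apply: (leq_trans h5).
rewrite /T /= -/B -/Z leq_exp2l //.
have h6 : B * 4 <= 2 ^ B.+2 by rewrite !expnS mulnC; have := ltn_expl B (isT : 1 < 2); lia.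
apply: (leq_trans h6); rewrite leq_exp2l //; apply: le_pow_succ2; lia.
Qed.

Lemma Rm_boundT (Rm : nat -> nat -> nat -> nat)
  (R0 : forall q s, Rm 0 q s = s)
  (RS : forall m q s, Rm m.+1 q s = q * (2 * q ^ (2 ^ Rm m q s)) ^ Rm m q s)
  m q s a : 3 <= a -> q <= 2 ^ a -> s <= 2 ^ a -> Rm m q s <= T (4 * m + 1) a.
Proof.
move=> a3 qa sa; elim: m => [|m IH]; first by rewrite R0.
rewrite RS.
have ab : a <= T (4 * m) a by exact: T_ge.
have -> : 4 * m.+1 + 1 = 5 + 4 * m by lia.
rewrite T_add; apply: step_bound.
- exact: leq_trans a3 ab.
- apply: leq_trans qa _; by rewrite leq_exp2l.
- by rewrite addn1 in IH.
Qed.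

Lemma sum_eq1 k x : x < k -> \sum_(i < k) (x == val i) = 1.
Proof.
move=> xk; rewrite (bigD1 (Ordinal xk)) //= eqxx big1 ?addn0 //.
move=> i Hi; case: eqP => // E; exfalso; move: Hi; apply/negP/negPn/eqP/val_inj => /=.
by rewrite E.
Qed.

Lemma sum_count k t : all (fun x => x < k) t -> \sum_(i < k) count_mem (val i) t = size t.
Proof.
elim: t => [|x t IH] /=; first by rewrite big1.
case/andP => xk tk; rewrite big_split /= sum_eq1 // IH //.
Qed.

Definition Mst n k (t : seq nat) : mset n k :=
  [ffun i : 'I_k => inord (count_mem (val i) t + (0 == val i) * (n - 4))].

Lemma Mval n k t i : 0 \notin t -> size t <= n ->
  (Mst n k t i : nat) = count_mem (val i) t + (0 == val i) * (n - 4).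
Proof.
move=> t0 st; rewrite ffunE inordK //.
have c0 : count_mem 0 t = 0 by apply/count_memPn.
case: eqP => [<-|_]; first by rewrite c0 /=; lia.
rewrite /= mul0n addn0; apply: leq_ltn_trans (count_size _ _) _; by rewrite ltnS.
Qed.

Lemma Msize n k t : 0 \notin t -> size t = 4 -> 4 <= n ->
  all (fun x => x < k) t -> 0 < k -> is_msize (Mst n k t).
Proof.
move=> t0 st n4 tk k0; rewrite /is_msize; apply/eqP.
under eq_bigr => i _ do rewrite Mval ?st //.
rewrite big_split /= sum_count // -big_distrl /= sum_eq1 // st; lia.
Qed.

Lemma main n k (pi : mset n k -> str n k) : 4 <= n -> Rm 4 (6 ^ n) 5 < k ->
  is_assignment pi -> 4 <= max_distortion pi.
Proof.
move=> n4 Rk api.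
have k0 : 0 < k by apply: leq_ltn_trans Rk.
pose z0 : 'I_k := Ordinal k0.
pose f (t : seq nat) : nat :=
  enum_rank [ffun p : 'I_n => (inord (index (val (pi (Mst n k t) p)) (0 :: t)) : 'I_6)].
have q0 : 0 < 6 ^ n by rewrite expn_gt0.
have fq : forall t, f t < 6 ^ n.
  move=> t; rewrite /f; set e := enum_rank _; apply: leq_trans (ltn_ord e) _.
  by rewrite card_ffun !card_ord.
pose G := iota 1 k.-1.
have pG : pairwise ltn G by rewrite -(sorted_pairwise ltn_trans) iota_ltn_sorted.
have szG : Rm 4 (6 ^ n) 5 <= size G by rewrite size_iota -ltnS prednK.
have [H [sH szH [c hc]]] := @ramsey 4 (6 ^ n) 5 f q0 fq G pG szG.
case: H sH szH hc => [|x1 [|x2 [|x3 [|x4 [|x5 [|? ?]]]]]] // sH _ hc.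
have pH : pairwise ltn [:: x1; x2; x3; x4; x5] := subseq_pairwise sH pG.
have [l12 l23 l34 l45] : [/\ x1 < x2, x2 < x3, x3 < x4 & x4 < x5].
  by move: pH; rewrite /= => /and5P [/and5P [-> _ _ _ _] /and4P [-> _ _ _] /and3P [-> _ _] /andP [-> _] _].
have inG : forall x, x \in [:: x1; x2; x3; x4; x5] -> 1 <= x < k.
  move=> x /(mem_subseq sH); rewrite mem_iota; lia.
have /andP [h1 _] : 1 <= x1 < k by apply: inG; rewrite !inE eqxx.
have /andP [_ h5] : 1 <= x5 < k by apply: inG; rewrite !inE eqxx !orbT.
pose T1 := [:: x1; x2; x3; x4]. pose T2 := [:: x2; x3; x4; x5].
have eqc : f T1 = f T2.
  rewrite (hc T1) ?(hc T2) //; first exact: (suffix_subseq [:: x1] T2).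
  exact: (prefix_subseq T1 [:: x5]).
have hidx : forall p, index (val (pi (Mst n k T1) p)) (0 :: T1)
                    = index (val (pi (Mst n k T2) p)) (0 :: T2).
  move=> p; move: eqc; rewrite /f => /val_inj/enum_rank_inj/ffunP/(_ p); rewrite !ffunE => /(congr1 (@nat_of_ord 6)).
  have b : forall v (t : seq nat), size t = 4 -> index v (0 :: t) < 6.
    by move=> v t st; rewrite ltnS; apply: leq_trans (index_size _ _) _; rewrite /= st.
  by rewrite !inordK ?b.
have T10 : 0 \notin T1 by rewrite !inE; apply/negP => /or4P [] /eqP E; lia.
have T20 : 0 \notin T2 by rewrite !inE; apply/negP => /or4P [] /eqP E; lia.
have T1k : all (fun x => x < k) T1 by rewrite /= !andbT; apply/and4P; split; lia.
have T2k : all (fun x => x < k) T2 by rewrite /= !andbT; apply/and4P; split; lia.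
have HM1 : is_msize (Mst n k T1) by apply: Msize.
have HM2 : is_msize (Mst n k T2) by apply: Msize.
have Hsd : symdiff_size (Mst n k T1) (Mst n k T2) = 2.
  rewrite /symdiff_size.
  transitivity (\sum_(i < k) ((x1 == val i) + (x5 == val i))).
    apply: eq_bigr => i _; rewrite !Mval //.
    have : (x1 == val i) + (x5 == val i) <= 1.
      case: (x1 =P val i) => [<-|_]; last by rewrite add0n leq_b1.
      rewrite gtn_eqF //; lia.
    rewrite /=; lia.
  rewrite big_split /= !sum_eq1 //; lia.
set w1 := pi (Mst n k T1); set w2 := pi (Mst n k T2).
have Hham : 4 <= hamming w1 w2.
  have lc0 : letter_count w1 z0 = n - 4.
    rewrite api // Mval //=.
    rewrite !gtn_eqF //; lia.
  have key : forall j, 0 < j < 5 -> nth 0 (0 :: T1) j != nth 0 (0 :: T2) j.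
    by case=> [|[|[|[|[|j]]]]] //= _; apply/eqP; lia.
  have Hsub : ~: [set p | w1 p == z0] \subset [set p | w1 p != w2 p].
    apply/subsetP => p; rewrite !inE => Hp.
    have u0 : val (w1 p) != 0 by apply: contra Hp => /eqP E; apply/eqP/val_inj.
    have lc : 0 < letter_count w1 (w1 p) by apply/card_gt0P; exists p; rewrite inE.
    have uin : val (w1 p) \in 0 :: T1.
      apply/negPn/negP => Hn; move: lc; rewrite api // Mval //.
      have -> : (0 == val (w1 p)) = false by rewrite eq_sym (negbTE u0).
      move: Hn; rewrite inE negb_or => /andP [_ /count_memPn ->]; done.
    have i5 : index (val (w1 p)) (0 :: T1) < 5 by rewrite -[5]/(size (0 :: T1)) index_mem.
    have i0 : 0 < index (val (w1 p)) (0 :: T1) by rewrite /= eq_sym (negbTE u0).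
    have e1 : nth 0 (0 :: T1) (index (val (w1 p)) (0 :: T1)) = val (w1 p) by rewrite nth_index.
    have e2 : nth 0 (0 :: T2) (index (val (w1 p)) (0 :: T1)) = val (w2 p).
      rewrite hidx nth_index // -index_mem -hidx; exact: i5.
    apply/negP => /eqP E; move: (key (index (val (w1 p)) (0 :: T1))).
    by rewrite i0 i5 e1 e2 E eqxx => /(_ isT).
  have g1 := subset_leq_card Hsub.
  have g2 := cardsC [set p | w1 p == z0].
  rewrite card_ord in g2.
  have g3 : #|[set p | w1 p == z0]| = n - 4 := lc0.
  rewrite /hamming; apply: leq_trans g1; rewrite g3 in g2; move: g2; set a := #|~: _|; clearbody a; lia.
rewrite /max_distortion.
apply: leq_trans (leq_bigmax_cond _ HM1); rewrite -/w1.
have HM2' : is_msize (Mst n k T2) && (symdiff_size (Mst n k T1) (Mst n k T2) == 2).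
  by rewrite HM2 Hsd.
apply: leq_trans Hham _.
exact: (@leq_bigmax_cond _ (fun S' => is_msize S' && (symdiff_size (Mst n k T1) S' == 2)) (fun S' => hamming w1 (pi S')) (Mst n k T2) HM2').
Qed.
Unset Implicit Arguments.

Definition Bn n := Rm 4 (6 ^ n) 5.
Lemma Bn_lock : {B : nat -> nat | forall n, B n = Bn n}. Proof. by exists Bn. Qed.

Theorem theorem2 :
  (exists c : nat, forall n k : nat, 5 <= n -> tower n.-1 (c * n) <= k ->
     forall pi : mset n k -> str n k, is_assignment pi -> 4 <= max_distortion pi)
  /\
  (exists n k : nat,
     forall pi : mset n k -> str n k, is_assignment pi -> 4 <= max_distortion pi).
Proof.
case: Bn_lock => B HB.
split; last first.
  exists 5, (B 5).+1 => pi api; apply: main; last exact: api.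
    exact: (isT : 3 < 5).
  rewrite HB; exact: leqnn.
exists (3 + \max_(j < 20) (B j).+1) => n k n5 hk pi api.
apply: main; [lia| |exact: api].
rewrite -/(Bn n) -HB.
apply: leq_trans hk.
set c := 3 + _.
have tw : forall x, tower n.-1 x = T (n - 2) x.
  by move=> x; rewrite /tower /T; congr iter; lia.
rewrite tw.
have c3 : 3 <= c by rewrite /c leq_addr.
case: (ltnP n 20) => hn.
  apply: leq_trans (T_ge _ _).
  have : (B n).+1 <= \max_(j < 20) (B j).+1.
    exact: (@leq_bigmax _ (fun j : 'I_20 => (B j).+1) (Ordinal hn)).
  move: c3; rewrite /c; nia.
have hb : B n <= T (4 * 4 + 1) (3 * n).
  rewrite HB /Bn; apply: (@Rm_boundT Rm) => //; first lia.
  - rewrite expnM; apply: expl_mono; exact: (isT : 6 <= 2 ^ 3).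
  - apply: leq_trans (ltnW (ltn_expl _ (isT : 1 < 2))); lia.
apply: leq_trans (_ : T 18 (3 * n) <= _).
  apply: leq_ltn_trans hb _; exact: ltn_expl.
apply: leq_trans (T_mono_h _ (_ : 18 <= n - 2)) _; first lia.
apply: T_mono_x; nia.
Qed.
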